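(* Let $(X,d,\mu)$ be geometrically doubling and upper doubling with dominating function $\lambda$, fix $\varrho>1$, and let $\alpha,\beta\ge2$. There is a constant $C$ depending only on the constants of the space and on $\varrho,\alpha,\beta$ such that: if $f\in L^1_{\mathrm{loc}}(\mu)$, $A\ge 0$ and numbers $(f_B)_B$ satisfy the $\mathrm{RBMO}(\mu)$ conditions with constant $A$, then for every $(\alpha,\beta)$-doubling ball $B$, $$\Big|\frac{1}{\mu(B)}\int_Bf\,d\mu-f_B\Big|\le CA.$$
   Context: Balls $B=B(x,r)=\{y:d(y,x)<r\}$ have specified centre $c_B=x$ and radius $r_B=r>0$; $tB:=B(x,tr)$. Geometrically doubling: there is $N$ such that every ball $B(x,r)$ is covered by at most $N$ balls of radius $r/2$. Upper doubling: $\mu$ is a Borel measure, finite on bounded sets, and $\lambda:X\times(0,\infty)\to(0,\infty)$ satisfies $r\mapsto\lambda(x,r)$ non-decreasing, $\lambda(x,2r)\le C_\lambda\lambda(x,r)$, $\mu(B(x,r))\le\lambda(x,r)$. A ball $B$ is $(\alpha,\beta)$-doubling if $\mu(\alpha B)\le\beta\mu(B)$. The $\mathrm{RBMO}(\mu)$ conditions with constant $A$ (parameter $\varrho$) on $f$ and numbers $f_B$: $\frac{1}{\mu(\varrho B)}\int_B|f-f_B|\,d\mu\le A$ for all balls $B$, and $|f_B-f_{B_1}|\le A\{1+\int_{2B_1\setminus B}\frac{d\mu(x)}{\lambda(c_B,d(x,c_B))}\}$ whenever $B\subset B_1$. $\|f\|_{\mathrm{RBMO}}$ is the infimum of admissible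 $A$. *)

(* Defs.v *)
From HB Require Import structures.
From mathcomp Require Import all_boot all_order all_algebra.
From mathcomp Require Import all_classical all_reals all_analysis.
Set Implicit Arguments. Unset Strict Implicit. Unset Printing Implicit Defensive.
Import Order.TTheory GRing.Theory Num.Theory.
Local Open Scope classical_set_scope.
Local Open Scope ring_scope.

Section Defs.
Context {R : realType} {d0 : measure_display} {X : measurableType d0}.
Variable dist : X -> X -> R.

Definition is_metric : Prop :=
  [/\ (forall x y, dist x y = 0 <-> x = y),
      (forall x y, dist x y = dist y x) &
      (forall x y z, dist x z <= dist x y + dist y z)].

Definition ball_d (x : X) (r : R) : set X := [set y | dist y x < r].

Definition geom_doubling (N : nat) : Prop :=
  forall x r, 0 < r -> exists s : seq X,
    (size s <= N)%N /\ ball_d x r `<=` \bigcup_(y in [set` s]) ball_d y (r / 2).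

Definition upper_doubling (mu : {measure set X -> \bar R}) (lam : X -> R -> R)
  (Clam : R) : Prop :=
  [/\ (forall x (r : R), 0 < r -> (mu (ball_d x r) < +oo)%E),
      (forall x r, 0 < r -> 0 < lam x r),
      (forall x r s, 0 < r -> r <= s -> lam x r <= lam x s),
      (forall x r, 0 < r -> lam x (2 * r) <= Clam * lam x r) &
      (forall x (r : R), 0 < r -> (mu (ball_d x r) <= (lam x r)%:E)%E)].

Definition L1loc (mu : {measure set X -> \bar R}) (f : X -> R) : Prop :=
  forall x r, 0 < r -> mu.-integrable (ball_d x r) (EFin \o f).

(* the two RBMO(mu) conditions with constant A, parameter rho,
   for the numbers fB x r  (= f_B for the ball B = B(x,r)) *)
Definition RBMO_cond (mu : {measure set X -> \bar R}) (lam : X -> R -> R)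
  (rho : R) (f : X -> R) (fB : X -> R -> R) (A : R) : Prop :=
  (forall x (r : R), 0 < r ->
     (\int[mu]_(y in ball_d x r) (`|f y - fB x r|)%:E
        <= A%:E * mu (ball_d x (rho * r)))%E) /\
  (forall x (r : R) x1 (r1 : R), 0 < r -> 0 < r1 -> ball_d x r `<=` ball_d x1 r1 ->
     ((`|fB x r - fB x1 r1|)%:E
       <= A%:E * (1 + \int[mu]_(y in ball_d x1 (2 * r1) `\` ball_d x r)
                          ((lam x (dist y x))^-1)%:E))%E).

Definition doubling_ball (mu : {measure set X -> \bar R}) (alpha beta : R)
  (x : X) (r : R) : Prop :=
  (mu (ball_d x (alpha * r)) <= beta%:E * mu (ball_d x r))%E.

End Defs.

(* Main.v *)
Require Import Defs.
From HB Require Import structures.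
From mathcomp Require Import all_boot all_order all_algebra.
From mathcomp Require Import all_classical all_reals all_analysis.
From mathcomp Require Import measurable_realfun.
From mathcomp Require Import ring lra.
Import Order.TTheory GRing.Theory Num.Theory.
Local Open Scope classical_set_scope.
Local Open Scope ring_scope.

Lemma le_int_nm d (T : measurableType d) (R : realType) (mu : {measure set T -> \bar R})
  (D : set T) (f1 f2 : T -> \bar R) :
  (forall x, D x -> (0 <= f1 x)%E) -> (forall x, D x -> (f1 x <= f2 x)%E) ->
  (\int[mu]_(x in D) f1 x <= \int[mu]_(x in D) f2 x)%E.
Proof.
move=> f10 f12.
have h1 x : (0 <= (f1 \_ D) x)%E by apply: erestrict_ge0.
have h2 x : (0 <= (f2 \_ D) x)%E.
  by apply: erestrict_ge0 => t Dt; exact: le_trans (f10 _ Dt) (f12 _ Dt).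
rewrite !(integral_mkcond D) !ge0_integralTE//.
apply: le_ereal_sup => _ [h hf <-]; exists h => // x.
apply: le_trans (hf x) _. rewrite /patch; case: ifP => // /[!inE] Dx; exact: f12.
Qed.

Lemma cover_lemma (R : realType) d0 (X : measurableType d0) (dist : X -> X -> R) N :
  geom_doubling dist N -> forall x r, 0 < r -> forall k : nat,
  exists s : seq X, (size s <= N ^ k)%N /\
    ball_d dist x r `<=` \bigcup_(y in [set` s]) ball_d dist y (r / 2 ^+ k).
Proof.
move=> gd x r r0; elim=> [|k [s [ss cs]]].
  exists [:: x]; split => // z Bz; exists x; first exact: mem_head.
  by rewrite expr0 divr1.
have rk0 : 0 < r / 2 ^+ k by rewrite divr_gt0 // exprn_gt0.
have /choice [e he] := fun y : X => gd y (r / 2 ^+ k) rk0.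
exists (flatten (map e s)); split.
  rewrite size_flatten /shape -map_comp.
  have H : (sumn [seq (size \o e) i | i <- s] <= size s * N)%N.
    elim: (s) => //= h t IH; rewrite mulSn; exact: leq_add (he h).1 IH.
  apply: leq_trans H _; rewrite expnSr; exact: leq_mul ss (leqnn N).
move=> z /cs [y /= ys /(he y).2 [w /= ws Bw]].
exists w; first by apply/flattenP; exists (e y) => //; apply/mapP; exists y.
move: Bw; rewrite /ball_d /= exprSr invfM mulrA. by [].
Qed.

Lemma Clam_gt0 (R : realType) d0 (X : measurableType d0) (dist : X -> X -> R)
  (mu : {measure set X -> \bar R}) lam Clam (y : X) :
  upper_doubling dist mu lam Clam -> 0 < Clam.
Proof.
case=> _ lp _ l2 _.
have h := l2 y 1 ltr01; have a := lp y 1 ltr01; have b := lp y (2 * 1) (mulr_gt0 (ltr0Sn _ 1) ltr01).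
rewrite -(pmulr_lgt0 _ a); exact: lt_le_trans b h.
Qed.

Lemma lam_pow (R : realType) d0 (X : measurableType d0) (dist : X -> X -> R)
  (mu : {measure set X -> \bar R}) lam Clam :
  upper_doubling dist mu lam Clam -> forall y s k, 0 < s ->
  lam y (2 ^+ k * s) <= Clam ^+ k * lam y s.
Proof.
move=> ud y s k s0; have C0 := @Clam_gt0 _ _ _ _ _ _ _ y ud; case: ud => _ lp _ l2 _.
elim: k => [|k IH]; first by rewrite !expr0 !mul1r.
rewrite exprS -mulrA; apply: le_trans (l2 _ _ _) _.
  by rewrite mulr_gt0 // exprn_gt0.
by rewrite exprS -mulrA ler_wpM2l // ltW.
Qed.

Lemma int_lam_bound (R : realType) d0 (X : measurableType d0) (dist : X -> X -> R)
  (mu : {measure set X -> \bar R}) lam Clam :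
  upper_doubling dist mu lam Clam -> forall (p : X) (s S : R) (D : set X),
  0 < s -> s <= S -> measurable D -> measurable (ball_d dist p S) ->
  D `<=` ball_d dist p S -> (forall z, D z -> s <= dist z p) ->
  (\int[mu]_(z in D) ((lam p (dist z p))^-1)%:E <= (lam p S / lam p s)%:E)%E.
Proof.
move=> ud p s S D s0 sS mD mB DB Ds; case: (ud) => _ lp lm _ lmu.
have ls := lp p s s0; have S0 : 0 < S := lt_le_trans s0 sS.
have H1 : (\int[mu]_(z in D) ((lam p (dist z p))^-1)%:E <=
    \int[mu]_(z in D) (cst ((lam p s)^-1)%:E) z)%E.
  apply: le_int_nm => z Dz; have dz := lt_le_trans s0 (Ds _ Dz).
    by rewrite (_ : 0%E = 0%:E)// lee_fin invr_ge0; apply/ltW/lp.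
  rewrite lee_fin lef_pV2 ?posrE ?lp //.
  exact: (lm p s (dist z p) s0 (Ds _ Dz)).
apply: le_trans H1 _.
rewrite integral_cst // EFinM muleC.
apply: lee_wpmul2r; first by rewrite lee_fin invr_ge0; exact: ltW.
apply: le_trans (lmu _ _ S0); apply: le_measure => //; rewrite inE //.
Qed.

Lemma meas_absf (R : realType) d0 (X : measurableType d0) (dist : X -> X -> R)
  (mu : {measure set X -> \bar R}) (f : X -> R) :
  L1loc dist mu f -> forall p s c, 0 < s ->
  measurable_fun (ball_d dist p s) (EFin \o (fun z => (`|f z - c| : R))).
Proof.
move=> L p s c s0; have /measurable_int/measurable_EFinP mf := L p s s0.
apply/measurable_EFinP; apply: measurableT_comp => //.
exact: measurable_funB.
Qed.

Lemma sum_le_const (R : realType) (I : Type) (s : seq I) (F : I -> \bar R) (c : R) :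
  (forall i, (F i <= c%:E)%E) -> (\sum_(i <- s) F i <= ((size s)%:R * c)%:E)%E.
Proof.
move=> Fc; elim: s => [|h t IH]; first by rewrite big_nil mul0r.
rewrite big_cons /= -addn1 natrD mulrDl mul1r addrC EFinD.
exact: leeD.
Qed.

Lemma le_sum_mem (R : realType) (I : eqType) (s : seq I) (F : I -> \bar R) (y : I) :
  (forall i, (0 <= F i)%E) -> y \in s -> (F y <= \sum_(i <- s) F i)%E.
Proof.
move=> F0; elim: s => [|h t IH] //; rewrite in_cons big_cons => /predU1P [->|yt].
  by rewrite leeDl // sume_ge0.
by apply: le_trans (IH yt) _; rewrite leeDr.
Qed.

Lemma ge0E (R : realType) (a : R) : (0 <= a)%R -> (0 <= a%:E)%E.
Proof. by rewrite lee_fin. Qed.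

Theorem lemma5p3 (R : realType) (N : nat) (Clam rho alpha beta : R) :
  1 < rho -> 2 <= alpha -> 2 <= beta ->
  exists C : R,
    forall (d0 : measure_display) (X : measurableType d0)
           (dist : X -> X -> R) (mu : {measure set X -> \bar R})
           (lam : X -> R -> R),
      is_metric dist ->
      (forall x r, measurable (ball_d dist x r)) ->
      geom_doubling dist N ->
      upper_doubling dist mu lam Clam ->
      forall (f : X -> R) (A : R) (fB : X -> R -> R),
        L1loc dist mu f -> 0 <= A ->
        RBMO_cond dist mu lam rho f fB A ->
        forall (x : X) (r : R), 0 < r ->
          doubling_ball dist mu alpha beta x r ->
          (0 < mu (ball_d dist x r))%E ->
          `| (fine (mu (ball_d dist x r)))^-1 * Rintegral mu (ball_d dist x r) f
             - fB x r | <= C * A.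
Proof.
move=> rho1 al2 be2.
pose m := (Num.truncn (1 + rho)).+1.
pose K := 3 + `|Clam| ^+ 2 + `|Clam| ^+ (m + 3).
exists ((N ^ m)%:R * (K * beta)).
move=> d0 X dist mu lam [d0E dsym dtri] mball gd ud f A fB L A0 [R1 R2] x r r0 db mupos.
have dge0 : forall a b, 0 <= dist a b.
  move=> a b; have := dtri a b a; rewrite (dsym b a) (proj2 (d0E a a) erefl); lra.
have C0 := @Clam_gt0 _ _ _ _ _ _ _ x ud.
rewrite /K (gtr0_norm C0).
have rho0 : 0 < rho := lt_trans ltr01 rho1.
have hm : 1 + rho <= 2 ^+ m.
  have := truncn_itv (ltW (addr_gt0 ltr01 rho0)) => /andP [_ h].
  apply: (le_trans (ltW h)); rewrite -natrX ler_nat; exact: ltnW (ltn_expl _ (ltnSn 1)).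
pose t := r / 2 ^+ m.
have t0 : 0 < t by rewrite divr_gt0 // exprn_gt0.
have ht : t * (1 + rho) <= r.
  rewrite /t mulrAC ler_pdivrMr ?exprn_gt0 // ler_pM2l //.
have ht2 : t + t <= r.
  nra.
have [s [ss cs]] := @cover_lemma _ _ _ _ _ gd x r r0 m.
case: (ud) => mfin lp lm l2 lmu.
pose B := ball_d dist x r.
have mBfin : (mu B < +oo)%E by exact: mfin.
pose mBr := fine (mu B).
have mBE : mu B = mBr%:E by rewrite fineK // ge0_fin_numE // measure_ge0.
have mBr0 : 0 < mBr by rewrite -lte_fin -mBE.
have ar0 : 0 < alpha * r by apply: mulr_gt0 => //; apply: lt_le_trans al2; exact: ltr0Sn.
pose mAr := fine (mu (ball_d dist x (alpha * r))).
have mAE : mu (ball_d dist x (alpha * r)) = mAr%:E.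
  by rewrite fineK // ge0_fin_numE ?measure_ge0 //; exact: mfin.
have mAb : mAr <= beta * mBr by rewrite -lee_fin EFinM -mAE -mBE.
pose c := fB x r.
pose g := fun z => ((`|f z - c|)%:E : \bar R).
pose K2 := 2 + Clam ^+ 2 + Clam ^+ (m + 3).
have claim : forall y, (\int[mu]_(z in ball_d dist y t `&` B) g z
                         <= (A * (1 + K2) * mAr)%:E)%E.
  move=> y.
  have Ce : 0 <= Clam := ltW C0.
  have K2g : 0 <= K2.
    rewrite /K2; apply: addr_ge0; first apply: addr_ge0 => //; exact: exprn_ge0.
  have mAr0 : 0 <= mAr by apply: fine_ge0; exact: measure_ge0.
  have K20 : 0 <= A * (1 + K2) * mAr.
    by rewrite !mulr_ge0 // addr_ge0.
  have [[z [Byz Bz]]|nz] := pselect (exists z, ball_d dist y t z /\ B z); last first.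
    rewrite (_ : _ `&` _ = set0); first by rewrite integral_set0 lee_fin.
    by apply/seteqP; split => // w [h1 h2]; apply: nz; exists w.
  have hy : dist y x < r + t.
    have := dtri y z x; rewrite (dsym y z); move: Byz Bz; rewrite /B /ball_d /= => h1 h2 h3; lra.
  have i1 : ball_d dist y (rho * t) `<=` ball_d dist x (alpha * r).
    move=> w; rewrite /ball_d /= => hw; have h := dtri w y x; nra.
  have i2 : ball_d dist y t `<=` ball_d dist x (alpha * r).
    move=> w; rewrite /ball_d /= => hw; have h := dtri w y x; nra.
  have i3 : ball_d dist y t `<=` ball_d dist x (2 * r).
    move=> w; rewrite /ball_d /= => hw; have h := dtri w y x; nra.
  have i4 : ball_d dist x r `<=` ball_d dist x (2 * r).
    move=> w; rewrite /ball_d /= => hw; nra.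
  have e8 : 2 ^+ (m + 3) * t = 8 * r.
    rewrite /t exprD; field; exact: expf_neq0.
  have i5 : ball_d dist x (2 * (2 * r)) `\` ball_d dist y t `<=` ball_d dist y (2 ^+ (m + 3) * t).
    move=> w [hw1 hw2]; move: hw1; rewrite /ball_d e8 /= => hw1; have := dtri w x y.
    rewrite (dsym x y); nra.
  have i6 : ball_d dist x (2 * (2 * r)) `\` ball_d dist x r `<=` ball_d dist x (2 ^+ 2 * r).
    by move=> w [hw1 _]; move: hw1; rewrite /ball_d /= expr2 mulrA.
  have r2 : 0 < 2 * r by rewrite mulr_gt0.
  have I1 : (\int[mu]_(w in ball_d dist x (2 * (2 * r)) `\` ball_d dist y t)
      ((lam y (dist w y))^-1)%:E <= (Clam ^+ (m + 3))%:E)%E.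
    apply: le_trans (@int_lam_bound _ _ _ _ _ _ _ ud y t (2 ^+ (m + 3) * t) _ t0 _
      (measurableD (mball _ _) (mball _ _)) (mball _ _) i5 _) _.
    - rewrite e8; nra.
    - move=> w [_ hw]; rewrite /ball_d /= in hw; rewrite leNgt; exact/negP.
    - rewrite lee_fin ler_pdivrMr ?lp //; exact: (@lam_pow _ _ _ _ _ _ _ ud).
  have I2 : (\int[mu]_(w in ball_d dist x (2 * (2 * r)) `\` ball_d dist x r)
      ((lam x (dist w x))^-1)%:E <= (Clam ^+ 2)%:E)%E.
    apply: le_trans (@int_lam_bound _ _ _ _ _ _ _ ud x r (2 ^+ 2 * r) _ r0 _
      (measurableD (mball _ _) (mball _ _)) (mball _ _) i6 _) _.
    - rewrite expr2; nra.
    - move=> w [_ hw]; rewrite /ball_d /= in hw; rewrite leNgt; exact/negP.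
    - rewrite lee_fin ler_pdivrMr ?lp //; exact: (@lam_pow _ _ _ _ _ _ _ ud).
  have h1 : `|fB y t - fB x (2 * r)| <= A * (1 + Clam ^+ (m + 3)).
    rewrite -lee_fin; apply: le_trans (R2 y t x (2 * r) t0 r2 i3) _.
    rewrite EFinM EFinD; apply: lee_wpmul2l; first by rewrite lee_fin.
    exact: leeD2l.
  have h2 : `|fB x r - fB x (2 * r)| <= A * (1 + Clam ^+ 2).
    rewrite -lee_fin; apply: le_trans (R2 x r x (2 * r) r0 r2 i4) _.
    rewrite EFinM EFinD; apply: lee_wpmul2l; first by rewrite lee_fin.
    exact: leeD2l.
  have hK : `|fB y t - c| <= A * K2.
    apply: le_trans (ler_distD (fB x (2 * r)) _ _) _.
    rewrite (distrC (fB x (2 * r))) /K2; lra.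
  have mgy := @meas_absf _ _ _ _ _ _ L y t (fB y t) t0.
  have mgc := @meas_absf _ _ _ _ _ _ L y t c t0.
  have H0 : (\int[mu]_(z in ball_d dist y t `&` B) g z <= \int[mu]_(z in ball_d dist y t) g z)%E.
    apply: ge0_subset_integral => //; first exact: measurableI (mball _ _) (mball _ _).
    by move=> w _; apply: ge0E.
  apply: le_trans H0 _.
  have H : (\int[mu]_(z in ball_d dist y t) g z <= \int[mu]_(z in ball_d dist y t)
      ((`|f z - fB y t|)%:E + (`|fB y t - c|)%:E))%E.
    apply: le_int_nm => w _; first by apply: ge0E.
    by rewrite /g -EFinD lee_fin; exact: ler_distD.
  apply: le_trans H _.
  rewrite ge0_integralD //.
  rewrite integral_cst //.
  have X1 : (A%:E * mu (ball_d dist y (rho * t)) <= (A * mAr)%:E)%E.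
    rewrite EFinM; apply: lee_wpmul2l; first by rewrite lee_fin.
    by rewrite -mAE; apply: le_measure => //; rewrite inE.
  have X2 : ((`|fB y t - c|)%:E * mu (ball_d dist y t) <= (A * K2 * mAr)%:E)%E.
    rewrite EFinM; apply: lee_pmul.
    - exact: ge0E.
    - exact: measure_ge0.
    - by rewrite lee_fin.
    - by rewrite -mAE; apply: le_measure => //; rewrite inE.
  apply: le_trans (leeD (le_trans (R1 y t t0) X1) X2) _.
  rewrite -EFinD lee_fin; nra.
have mgB := @meas_absf _ _ _ _ _ _ L x r c r0.
have hsum : (\int[mu]_(z in B) g z <=
    \sum_(y <- s) \int[mu]_(z in ball_d dist y t `&` B) g z)%E.
  have H : (\int[mu]_(z in B) g z <=
      \int[mu]_(z in B) (\sum_(y <- s) (g \_ (ball_d dist y t)) z))%E.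
    apply: le_int_nm => z Bz; first exact: ge0E.
    have [y ys Byz] := cs z Bz.
    have -> : g z = (fun y => (g \_ (ball_d dist y t)) z) y.
      by rewrite /patch mem_set.
    apply: le_sum_mem => // w; rewrite /patch; case: ifP => // _; exact: ge0E.
  apply: le_trans H _; rewrite ge0_integral_sum //.
  - rewrite le_eqVlt; apply/orP; left; apply/eqP; apply: eq_bigr => y _.
    by rewrite integral_mkcondl.
  - exact: mball.
  - move=> y; apply/(measurable_restrict _ (mball y t) (mball x r)).
    apply: measurable_funS mgB => //; exact: subIsetl.
  - move=> y w _; rewrite /patch; case: ifP => // _; exact: ge0E.
have Ce : 0 <= Clam := ltW C0.
have K2g : 0 <= K2.
  rewrite /K2; apply: addr_ge0; first apply: addr_ge0 => //; exact: exprn_ge0.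
have mAr0 : 0 <= mAr by apply: fine_ge0; exact: measure_ge0.
have htot : (\int[mu]_(z in B) g z <=
    ((N ^ m)%:R * ((3 + Clam ^+ 2 + Clam ^+ (m + 3)) * beta) * A * mBr)%:E)%E.
  apply: le_trans hsum _; apply: le_trans (@sum_le_const _ _ s _ _ claim) _; rewrite lee_fin.
  have hs : (size s)%:R <= (N ^ m)%:R :> R by rewrite ler_nat.
  have P0 : 0 <= A * (1 + K2) by rewrite mulr_ge0 // addr_ge0.
  apply: le_trans (ler_pM _ _ hs (ler_pM P0 mAr0 (le_refl _) mAb)) _.
  - exact: ler0n.
  - exact: mulr_ge0.
  rewrite le_eqVlt; apply/orP; left; apply/eqP; rewrite /K2; ring.
have intf := L x r r0.
have Ifin : (\int[mu]_(z in B) (f z)%:E)%E \is a fin_num.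
  exact: (integrable_fin_num (mball x r) intf).
have intc : mu.-integrable B (EFin \o cst c).
  apply/integrableP; split; first exact: measurableT_comp.
  rewrite (eq_integral (cst (`|c|)%:E)); last by move=> z _.
  rewrite integral_cst; last exact: mball.
  by apply: lte_mul_pinfty.
have hdiff := integralB_EFin (mball x r) intf intc.
have mdf : measurable_fun B (fun z => ((f z)%:E - (cst c z)%:E)%E).
  apply: emeasurable_funB; [exact (measurable_int mu intf)|exact: measurableT_comp].
have habs := le_abse_integral mu (mball x r) mdf.
rewrite hdiff in habs.
have mBE' : mu (ball_d dist x r) = mBr%:E := mBE.
have ec : (\int[mu]_(z in ball_d dist x r) (cst c z)%:E = (c * mBr)%:E)%E.
  rewrite (eq_integral (cst c%:E)); last by [].
  by rewrite integral_cst ?mBE' ?EFinM //; exact: mball.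
have eg : (\int[mu]_(z in ball_d dist x r) `|(f z)%:E - (cst c z)%:E| =
   \int[mu]_(z in B) g z)%E.
  by apply: eq_integral => z _; rewrite /g -EFinB.
rewrite ec eg -(fineK Ifin) -EFinB in habs.
have hR : `|fine (\int[mu]_(z in B) (f z)%:E) - c * mBr| <=
    (N ^ m)%:R * ((3 + Clam ^+ 2 + Clam ^+ (m + 3)) * beta) * A * mBr.
  by rewrite -lee_fin; apply: le_trans habs htot.
rewrite /Rintegral.
change (fine (mu (ball_d dist x r))) with mBr.
change (ball_d dist x r) with B.
rewrite (_ : mBr^-1 * _ - fB x r = mBr^-1 * (fine (\int[mu]_(z in B) (f z)%:E) - c * mBr)); last first.
  rewrite /c; field; exact: lt0r_neq0.
rewrite normrM gtr0_norm ?invr_gt0 // ler_pdivrMl //.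
by rewrite [mBr * _]mulrC.
Qed.
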